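(* Let $A$ be a commutative $\mathbb C$-algebra, $q\in\mathbb C\setminus\{0\}$, $k$ a positive integer and $n$ a positive integer. Let $g\in A$ and $\mathfrak e_i,\mathfrak h_i,\mathfrak p_i\in A$ ($0\le i\le n$) satisfy $\mathfrak e_0=\mathfrak h_0=1$, $\mathfrak p_0=q^{1-k}\bigl(1+(k-1)_q\bigr)$, and for every $1\le m\le n$ $$\sum_{i=0}^{m-1}(-q)^i\mathfrak e_i\mathfrak p_{m-i}=(-1)^{m-1}m_q\,\mathfrak e_m+(-1)^mq\sum_{i=1}^{\lfloor m/2\rfloor}\bigl(q^{m-2i-k}-q^{-m+2i}\bigr)\mathfrak e_{m-2i}g^i,$$ $$\sum_{i=0}^{m-1}q^{-i}\mathfrak h_i\mathfrak p_{m-i}=m_q\,\mathfrak h_m+\sum_{i=1}^{\lfloor m/2\rfloor}\bigl(q^{m-2i-1}+q^{-m+2i+1-k}\bigr)\mathfrak h_{m-2i}g^i,$$ and for every $0\le m\le n$: $\sum_{i=0}^m(-1)^i\mathfrak e_i\mathfrak h_{m-i}=\delta_{m,0}-\delta_{m,2}\,g$. Define $\mathfrak e'_i,\mathfrak h'_i$ by $\mathfrak e'_i=\mathfrak h'_i=0$ for $i<0$ and $\mathfrak e'_i=\mathfrak e_i+\mathfrak e'_{i-2}g$, $\mathfrak h'_i=\mathfrak h_i+\mathfrak h'_{i-2}g$ for $i\ge0$; define $\mathfrak p'_0=q^{-k}k_q$, $\mathfrak p'_1=\mathfrak p_1$, $\mathfrak p'_i=\mathfrak p_i+(q^2\mathfrak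 p'_{i-2}-\mathfrak p_{i-2})g$ ($i\ge2$); and $\mathfrak p''_0=q^{2-k}(k-2)_q$, $\mathfrak p''_1=\mathfrak p_1$, $\mathfrak p''_i=\mathfrak p_i+(q^{-2}\mathfrak p''_{i-2}-\mathfrak p_{i-2})g$ ($i\ge2$). Then for all $1\le m\le n$ $$\sum_{i=0}^{m-1}(-q)^i\mathfrak e_i\mathfrak p'_{m-i}=(-1)^{m-1}m_q\,\mathfrak e_m,\qquad \sum_{i=0}^{m-1}q^{-i}\mathfrak h_i\mathfrak p''_{m-i}=m_q\,\mathfrak h_m,$$ and for all $0\le m\le n$ $$\sum_{i=0}^m(-1)^i\mathfrak e'_i\mathfrak h_{m-i}=\delta_{m,0}=\sum_{i=0}^m(-1)^i\mathfrak e_i\mathfrak h'_{m-i}.$$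
   Context: For an integer $m\ge0$, $m_q:=q^{m-1}+q^{m-3}+\dots+q^{1-m}$ (so $m_q=(q^m-q^{-m})/(q-q^{-1})$ when $q^2\ne1$, and $0_q=0$); for negative $m$, $m_q:=-(-m)_q$. $\delta_{a,b}$ is the Kronecker symbol. *)

(* Defs.v *)
From HB Require Import structures.
From mathcomp Require Import all_boot all_order all_algebra.
From mathcomp Require Import complex.
From mathcomp Require Export reals.
Set Implicit Arguments. Unset Strict Implicit. Unset Printing Implicit Defensive.
Import Order.TTheory GRing.Theory Num.Theory.
Local Open Scope ring_scope.

Definition qnat {F : unitRingType} (q : F) (m : nat) : F :=
  \sum_(j < m) q ^ (m%:Z - 1 - (2 * j)%:Z).

(* m_q for m : int, with m_q = -(-m)_q for negative m. *)
Definition qint {F : unitRingType} (q : F) (z : int) : F :=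
  match z with
  | Posz m => qnat q m
  | Negz m => - qnat q m.+1
  end.

Section Primes.
Variables (F : fieldType) (A : comAlgType F).

Fixpoint xprime (x : nat -> A) (g : A) (i : nat) : A :=
  match i with
  | 0 => x 0
  | 1 => x 1
  | j.+2 => x j.+2 + xprime x g j * g
  end.

Fixpoint pmod (c0 c : F) (p : nat -> A) (g : A) (i : nat) : A :=
  match i with
  | 0 => c0%:A
  | 1 => p 1
  | j.+2 => p j.+2 + (c *: pmod c0 c p g j - p j) * g
  end.
End Primes.

(* Main.v *)
Require Import Defs.
From HB Require Import structures.
From mathcomp Require Import all_boot all_order all_algebra.
From mathcomp Require Import complex.
From mathcomp Require Import reals.
From mathcomp Require Import ring zify.
Import Order.TTheory GRing.Theory Num.Theory.
Local Open Scope ring_scope.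

Section Sc.
Variable (F : fieldType) (q : F).
Hypothesis Hq : q != 0.

Lemma pwD (a b : nat) : q ^ (a%:Z - b%:Z) = q ^+ a / q ^+ b.
Proof. by rewrite expfzDr // -exprnN -exprnP. Qed.
Lemma pwN (a : nat) : q ^ (- a%:Z) = (q ^+ a)^-1.
Proof. by rewrite -exprnN. Qed.
Lemma pwP (a : nat) : q ^ (a%:Z) = q ^+ a.
Proof. by rewrite -exprnP. Qed.

Lemma qnatS m : qnat q m.+1 = q ^+ m + qnat q m / q.
Proof.
rewrite /qnat big_ord_recl /=.
have -> : (m.+1%:Z - 1 - (2 * 0)%:Z) = m%:Z by lia.
rewrite pwP; congr (_ + _).
rewrite big_distrl /=; apply: eq_bigr => j _.
have -> : (m.+1%:Z - 1 - (2 * (bump 0 j))%:Z) = (m%:Z - 1 - (2 * j)%:Z) + (-1) .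
  rewrite /bump /=; lia.
by rewrite expfzDr // exprN1.
Qed.

Lemma qnat0 : qnat q 0 = 0.
Proof. by rewrite /qnat big_ord0. Qed.

Lemma L1 m : (q ^+ 2 - 1) * qnat q m = q * q ^+ m - q / q ^+ m.
Proof.
elim: m => [|m IH]; first by rewrite qnat0 expr0 invr1; ring.
rewrite qnatS mulrDr.
have -> : (q ^+ 2 - 1) * (qnat q m / q) = ((q ^+ 2 - 1) * qnat q m) / q by ring.
rewrite IH [q ^+ m.+1]exprS. field.
by rewrite ?expf_neq0 ?Hq.
Qed.


Lemma sgnm1 m : (-1) ^+ m.-1 * qnat q m = - ((-1) ^+ m * qnat q m) :> F.
Proof. case: m => [|m]; first by rewrite qnat0 !mulr0 oppr0. by rewrite /= exprS; ring. Qed.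

Lemma S1id m K :
  (-1)^+m * q * (q^+m / q^+K.+1 - (q^+m)^-1) + (q^+2 - 1) * ((-1)^+m.-1 * qnat q m)
  + (-1)^+m * q^+m * (q^+2 * ((q^+K.+1)^-1 * qnat q K.+1) - q / q^+K.+1 * (1 + qnat q K)) = 0.
Proof.
rewrite sgnm1.
have -> : (q ^+ 2 - 1) * - ((-1) ^+ m * qnat q m) = - ((-1) ^+ m * ((q ^+ 2 - 1) * qnat q m)) by ring.
rewrite L1 qnatS [q ^+ K.+1]exprS; field.
by rewrite ?expf_neq0 ?Hq.
Qed.

Lemma S2id m K J : J = q * qnat q K - q ^+ K ->
  q^+m / q + q / (q^+m * q^+K.+1) + ((q^+2)^-1 - 1) * qnat q m
  + (q^+m)^-1 * ((q^+2)^-1 * (q^+2 / q^+K.+1 * J) - q / q^+K.+1 * (1 + qnat q K)) = 0.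
Proof.
move=> ->.
have -> : ((q ^+ 2)^-1 - 1) * qnat q m = - ((q ^+ 2 - 1) * qnat q m) / q ^+ 2.
  field; by rewrite ?expf_neq0 ?Hq.
rewrite L1 [q ^+ K.+1]exprS; field.
by rewrite ?expf_neq0 ?Hq.
Qed.

End Sc.

Section Alg.
Variable (F : fieldType) (A : comAlgType F).

Lemma scA (a : F) (x : A) : a *: x = GRing.in_alg A a * x.
Proof. by rewrite mulr_algl. Qed.

Lemma GL (w : nat -> F) c0 c (e p : nat -> A) g m :
  \sum_(i < m.+2) (w i *: (e i * pmod c0 c p g (m.+2 - i)%N))
  = \sum_(i < m.+2) (w i *: (e i * p (m.+2 - i)%N))
    + (c *: \sum_(i < m) (w i *: (e i * pmod c0 c p g (m - i)%N))
       - \sum_(i < m) (w i *: (e i * p (m - i)%N))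
       + w m *: (e m * (c *: c0%:A - p 0))) * g.
Proof.
rewrite big_ord_recr [X in _ = X + _]big_ord_recr /=.
have -> : (m.+2 - m.+1 = 1)%N by lia.
have E : forall i : 'I_m.+1, (m.+2 - i = (m - i).+2)%N.
  by move=> i; have := ltn_ord i; lia.
under eq_bigr => i _ do rewrite E /=.
under [X in _ = X + _ + _]eq_bigr => i _ do rewrite E.
under eq_bigr => i _ do rewrite mulrDr scalerDr.
rewrite big_split /= [X in _ + X + _ = _]big_ord_recr /= subnn /=.
have -> : \sum_(i < m) w i *: (e i * ((c *: pmod c0 c p g (m - i)%N - p (m - i)%N) * g))
  = (c *: \sum_(i < m) (w i *: (e i * pmod c0 c p g (m - i)%N))
       - \sum_(i < m) (w i *: (e i * p (m - i)%N))) * g.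
  rewrite scaler_sumr -sumrB mulr_suml; apply: eq_bigr => i _.
  rewrite !scA; ring.
rewrite !scA; ring.
Qed.


Lemma Qrec (f : nat -> nat -> F) (x : nat -> A) g m : (forall i, f m.+2 i.+1 = f m i) ->
  \sum_(1 <= i < ((m.+2)./2).+1) (f m.+2 i *: (x (m.+2 - 2 * i)%N * g ^+ i))
  = f m.+2 1%N *: (x m * g) + (\sum_(1 <= i < (m./2).+1) (f m i *: (x (m - 2 * i)%N * g ^+ i))) * g.
Proof.
move=> Hf; rewrite /= big_nat_recl // mulr_suml.
have -> : (m.+2 - 2 * 1 = m)%N by lia.
rewrite expr1; congr (_ + _); apply: eq_bigr => i _.
rewrite Hf.
have -> : (m.+2 - 2 * i.+1 = m - 2 * i)%N by lia.
rewrite exprSr !scA; ring.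
Qed.

Lemma Srec3 (e h : nat -> A) g m :
  \sum_(i < m.+3) ((-1)^+i * xprime e g i * h (m.+2 - i)%N)
  = \sum_(i < m.+3) ((-1)^+i * e i * h (m.+2 - i)%N)
    + (\sum_(i < m.+1) ((-1)^+i * xprime e g i * h (m - i)%N)) * g.
Proof.
rewrite mulr_suml [in LHS]big_ord_recl [in LHS]big_ord_recl.
rewrite [X in _ = X + _]big_ord_recl [X in _ = _ + X + _]big_ord_recl /=.
rewrite -!addrA; congr (_ + (_ + _)).
rewrite -big_split /=; apply: eq_bigr => i _.
rewrite /bump /= !add0n !add1n subSS !exprS; ring.
Qed.

Lemma Srec4 (e h : nat -> A) g m :
  \sum_(i < m.+3) ((-1)^+i * e i * xprime h g (m.+2 - i)%N)
  = \sum_(i < m.+3) ((-1)^+i * e i * h (m.+2 - i)%N)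
    + (\sum_(i < m.+1) ((-1)^+i * e i * xprime h g (m - i)%N)) * g.
Proof.
rewrite mulr_suml [in LHS]big_ord_recr [in LHS]big_ord_recr.
rewrite [X in _ = X + _]big_ord_recr [X in _ = X + _ + _]big_ord_recr /=.
have -> : (m.+2 - m.+2 = 0)%N by lia.
have -> : (m.+2 - m.+1 = 1)%N by lia.
have -> : \sum_(i < m.+1) (-1) ^+ i * e i * xprime h g (m.+2 - i)%N
  = \sum_(i < m.+1) (-1) ^+ i * e i * h (m.+2 - i)%N
    + \sum_(i < m.+1) (-1) ^+ i * e i * xprime h g (m - i)%N * g.
  rewrite -big_split /=; apply: eq_bigr => i _.
  have -> : (m.+2 - i = (m - i).+2)%N by have := ltn_ord i; lia.
  rewrite /=; ring.
rewrite /=; ring.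
Qed.

End Alg.

Theorem lemma6p5 (R : realType) (A : comAlgType (complex R))
    (q : complex R) (k n : nat) (g : A) (e h p : nat -> A) :
  q != 0 -> (0 < k)%N -> (0 < n)%N ->
  e 0%N = 1 -> h 0%N = 1 ->
  p 0%N = (q ^ (1 - k%:Z) * (1 + qint q (k%:Z - 1)))%:A ->
  (forall m : nat, (1 <= m <= n)%N ->
     \sum_(i < m) ((- q) ^+ i *: (e i * p (m - i)%N))
     = (-1) ^+ m.-1 *: (qnat q m *: e m)
       + (-1) ^+ m *: (q *: \sum_(1 <= i < (m./2).+1)
            ((q ^ (m%:Z - (2 * i)%:Z - k%:Z) - q ^ (- m%:Z + (2 * i)%:Z))
               *: (e (m - 2 * i)%N * g ^+ i)))) ->
  (forall m : nat, (1 <= m <= n)%N ->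
     \sum_(i < m) (q ^ (- i%:Z) *: (h i * p (m - i)%N))
     = qnat q m *: h m
       + \sum_(1 <= i < (m./2).+1)
            ((q ^ (m%:Z - (2 * i)%:Z - 1) + q ^ (- m%:Z + (2 * i)%:Z + 1 - k%:Z))
               *: (h (m - 2 * i)%N * g ^+ i))) ->
  (forall m : nat, (m <= n)%N ->
     \sum_(i < m.+1) ((-1) ^+ i * e i * h (m - i)%N)
     = (m == 0%N)%:R - (m == 2%N)%:R * g) ->
  let e' := xprime e g in
  let h' := xprime h g in
  let p' := pmod (q ^ (- k%:Z) * qint q k%:Z) (q ^+ 2) p g in
  let p'' := pmod (q ^ (2 - k%:Z) * qint q (k%:Z - 2)) (q ^ (-2)) p g in
  (forall m : nat, (1 <= m <= n)%N ->
     \sum_(i < m) ((- q) ^+ i *: (e i * p' (m - i)%N))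
     = (-1) ^+ m.-1 *: (qnat q m *: e m)) /\
  (forall m : nat, (1 <= m <= n)%N ->
     \sum_(i < m) (q ^ (- i%:Z) *: (h i * p'' (m - i)%N))
     = qnat q m *: h m) /\
  (forall m : nat, (m <= n)%N ->
     \sum_(i < m.+1) ((-1) ^+ i * e' i * h (m - i)%N) = (m == 0%N)%:R) /\
  (forall m : nat, (m <= n)%N ->
     \sum_(i < m.+1) ((-1) ^+ i * e i * h' (m - i)%N) = (m == 0%N)%:R).
Proof.
move=> Hq; case: k => [//|K] _ n0 e0 h0 p0 H1 H2 H3 e' h' p' p''.
rewrite {}/e' {}/h' {}/p' {}/p''.
have P3 : forall m, (m <= n)%N ->
   \sum_(i < m.+1) ((-1) ^+ i * xprime e g i * h (m - i)%N) = (m == 0%N)%:R.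
  elim/ltn_ind => m IH Hm; case: m IH Hm => [|[|m]] IH Hm.
  - by rewrite big_ord1 /= e0 h0 expr0 !mul1r.
  - transitivity (\sum_(i < 2) ((-1) ^+ i * e i * h (1 - i)%N)); last by rewrite H3 //= mul0r subr0.
    by rewrite !big_ord_recr !big_ord0 /=.
  - rewrite (@Srec3 _ _ e h g m) H3 // IH //; last by lia.
    by case: m {IH Hm} => [|j] /=; ring.
have P4 : forall m, (m <= n)%N ->
   \sum_(i < m.+1) ((-1) ^+ i * e i * xprime h g (m - i)%N) = (m == 0%N)%:R.
  elim/ltn_ind => m IH Hm; case: m IH Hm => [|[|m]] IH Hm.
  - by rewrite big_ord1 /= e0 h0 expr0 !mul1r.
  - transitivity (\sum_(i < 2) ((-1) ^+ i * e i * h (1 - i)%N)); last by rewrite H3 //= mul0r subr0.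
    by rewrite !big_ord_recr !big_ord0 /=.
  - rewrite (@Srec4 _ _ e h g m) H3 // IH //; last by lia.
    by case: m {IH Hm} => [|j] /=; ring.
split; last split; last split => //.
- move=> m /andP[_]; elim/ltn_ind: m => m IH Hm.
  case: m IH Hm => [|[|m]] IH Hm.
  + by rewrite big_ord0 qnat0 scale0r scaler0.
  + rewrite big_ord1 subn0 /=.
    have := H1 1%N; rewrite /= Hm => /(_ isT).
    by rewrite big_ord1 subn0 big_geq // !scaler0 addr0 => <-.
  + rewrite (@GL _ _ (fun i => (- q) ^+ i)).
    have IHm : \sum_(i < m) (- q) ^+ i *: (e i * pmod (q ^ (- K.+1%:Z) * qint q K.+1%:Z) (q ^+ 2) p g (m - i)%N)
       = (-1) ^+ m.-1 *: (qnat q m *: e m).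
      case: (posnP m) => [->|mpos]; first by rewrite big_ord0 qnat0 scale0r scaler0.
      apply: IH; lia.
    have HPm : \sum_(i < m) (- q) ^+ i *: (e i * p (m - i)%N)
       = (-1) ^+ m.-1 *: (qnat q m *: e m) + (-1) ^+ m *: (q *:
         \sum_(1 <= i < (m./2).+1) ((q ^ (m%:Z - (2 * i)%:Z - K.+1%:Z) - q ^ (- m%:Z + (2 * i)%:Z)) *: (e (m - 2 * i)%N * g ^+ i))).
      case: (posnP m) => [->|mpos]; first by rewrite big_ord0 qnat0 big_geq // scale0r !scaler0 addr0.
      apply: H1; lia.
    rewrite IHm HPm H1; last by lia.
    rewrite (@Qrec _ _ (fun m i => q ^ (m%:Z - (2 * i)%:Z - K.+1%:Z) - q ^ (- m%:Z + (2 * i)%:Z))); last first.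
      by move=> i /=; congr (q ^ _ - q ^ _); lia.
    rewrite p0 /= ?subn1 /=.
    have Hs : (-1)^+m * q * (q ^ (m.+2%:Z - (2 * 1)%:Z - K.+1%:Z) - q ^ (- m.+2%:Z + (2 * 1)%:Z))
       + (q^+2 - 1) * ((-1)^+m.-1 * qnat q m)
       + (- q)^+m * (q^+2 * (q ^ (- K.+1%:Z) * qnat q K.+1) - q ^ (1 - K.+1%:Z) * (1 + qnat q K)) = 0.
      have -> : (m.+2%:Z - (2 * 1)%:Z - K.+1%:Z) = m%:Z - K.+1%:Z by lia.
      have -> : (- m.+2%:Z + (2 * 1)%:Z) = - m%:Z by lia.
      have -> : (1 - K.+1%:Z) = 1%N%:Z - K.+1%:Z by lia.
      rewrite !pwD // !pwN // expr1 -(@S1id _ q Hq m K); congr (_ + _ + _).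
      by rewrite (exprNn q).
    rewrite [((-1) ^+ m.+2 : complex R)]exprS [((-1) ^+ m.+1 : complex R)]exprS.
    apply/eqP; rewrite -subr_eq0 -(scale0r (e m * g)) -Hs; apply/eqP.
    rewrite !scA; ring.
- move=> m /andP[_]; elim/ltn_ind: m => m IH Hm.
  case: m IH Hm => [|[|m]] IH Hm.
  + by rewrite big_ord0 qnat0 scale0r.
  + rewrite big_ord1 subn0 /=.
    have := H2 1%N; rewrite /= Hm => /(_ isT).
    by rewrite big_ord1 subn0 big_geq // addr0 => <-.
  + rewrite (@GL _ _ (fun i => q ^ (- i%:Z))).
    have IHm : \sum_(i < m) q ^ (- i%:Z) *: (h i * pmod (q ^ (2 - K.+1%:Z) * qint q (K.+1%:Z - 2)) (q ^ (-2)) p g (m - i)%N)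
       = qnat q m *: h m.
      case: (posnP m) => [->|mpos]; first by rewrite big_ord0 qnat0 scale0r.
      apply: IH; lia.
    have HPm : \sum_(i < m) q ^ (- i%:Z) *: (h i * p (m - i)%N)
       = qnat q m *: h m +
         \sum_(1 <= i < (m./2).+1) ((q ^ (m%:Z - (2 * i)%:Z - 1) + q ^ (- m%:Z + (2 * i)%:Z + 1 - K.+1%:Z)) *: (h (m - 2 * i)%N * g ^+ i)).
      case: (posnP m) => [->|mpos]; first by rewrite big_ord0 qnat0 big_geq // scale0r addr0.
      apply: H2; lia.
    rewrite IHm HPm H2; last by lia.
    rewrite (@Qrec _ _ (fun m i => q ^ (m%:Z - (2 * i)%:Z - 1) + q ^ (- m%:Z + (2 * i)%:Z + 1 - K.+1%:Z))); last first.
      by move=> i /=; congr (q ^ _ + q ^ _); lia.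
    rewrite p0 /= ?subn1 /=.
    have HJ : qint q (K.+1%:Z - 2) = q * qnat q K - q ^+ K.
      case: K {H1 H2 p0 IHm HPm IH} => [|J].
        rewrite /=; have -> : (0 + 1 - 1 = 0)%N by [].
        by rewrite (@qnatS _ q Hq) !qnat0 mulr0 mul0r addr0 expr0 sub0r.
      have -> : (J.+2%:Z - 2) = J%:Z by lia.
      rewrite /= (@qnatS _ q Hq) exprS; field. exact: Hq.
    have Hs : (q ^ (m.+2%:Z - (2 * 1)%:Z - 1) + q ^ (- m.+2%:Z + (2 * 1)%:Z + 1 - K.+1%:Z))
       + (q ^ (-2) - 1) * qnat q m
       + q ^ (- m%:Z) * (q ^ (-2) * (q ^ (2 - K.+1%:Z) * qint q (K.+1%:Z - 2)) - q ^ (1 - K.+1%:Z) * (1 + qnat q K)) = 0.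
      have -> : (m.+2%:Z - (2 * 1)%:Z - 1) = m%:Z - 1%N%:Z by lia.
      have -> : (- m.+2%:Z + (2 * 1)%:Z + 1 - K.+1%:Z) = 1%N%:Z - (m + K.+1)%N%:Z by lia.
      have -> : (-2 : int) = - 2%N%:Z by [].
      have -> : (2 - K.+1%:Z) = 2%N%:Z - K.+1%:Z by lia.
      have -> : (1 - K.+1%:Z) = 1%N%:Z - K.+1%:Z by lia.
      rewrite !pwD // !pwN // expr1 exprD -(@S2id _ q Hq m K _ HJ).
      by [].
    apply/eqP; rewrite -subr_eq0 -(scale0r (h m * g)) -Hs; apply/eqP.
    rewrite !scA; ring.
Qed.
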